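(* Either let all graphs below be undirected, or let all be directed. Let $D$ be a graph with $n$ vertices and $f(D)=f$, let $R\subseteq V(D)$ be a bad set of $D$, and let $r'\in V(D)\setminus R$. Then there is a family $(D_i)_{i\in\mathbb{N}}$ of graphs such that for every $i$: \begin{itemize} \item $n(D_i)=n+i(n-1)$; \item $f(D_i)\geq f+if$, with equality if $R$ is an inclusion-wise minimal bad set of $D$; \item the degeneracy of $D_i$ is at most $\mathrm{deg}_{\mathrm{RL}}(D,R,r')$. \end{itemize}
   Context: Undirected graphs are finite and simple; directed graphs are oriented graphs (no loops, no multiple arcs, no antiparallel arcs). $n(H)$ is the number of vertices; $f(H)$ is the minimum size of a set $F\subseteq V(H)$ such that $H-F$ has no (directed, in the directed case) cycle. A set $R\subseteq V(H)$ is bad if it is not contained in any minimum feedback vertex set of $H$. A vertex ordering $\phi:V\to\{1,\dots,|V|\}$ is a $k$-elimination ordering if every vertex has at most $k$ neighbours (in the underlying undirected graph) preceding it in $\phi$; the degeneracy of a graph is the least such $k$. For $S\subseteq V$, an ordering is $S$-last if $\phi(u)<\phi(v)$ for all $u\in S$ and $v\in V\setminus S$. Let $D_{r'\times|R|}$ be the graph obtained from $D$ by replacing $r'$ by an independent set $S$ of $|R|$ new vertices, each joined to the rest of $D$ exactly as $r'$ was (same in- and out-neighbours in the directed case, same neighbours in the undirected case). The right-left-degeneracy $\mathrm{deg}_{\mathrm{RL}}(D,R,r')$ is the minimum $k$ such that $D_{r'\times|R|}$ has an $S$-last $k$-elimination ordering. $\mathbb{N}=\{0,1,2,\dots\}$.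 *)

(* Defs.v *)
From mathcomp Require Import all_boot.
Set Implicit Arguments. Unset Strict Implicit. Unset Printing Implicit Defensive.

Definition is_graph (directed : bool) (T : finType) (e : rel T) : bool :=
  [forall x, ~~ e x x] &&
  (if directed then [forall x, forall y, e x y ==> ~~ e y x]
   else [forall x, forall y, e x y == e y x]).

(* Undirected: at least 3 vertices; directed: a directed closed walk without
   repeated vertices (length >= 3 automatically in an oriented graph). *)
Definition is_cyc (directed : bool) (T : finType) (e : rel T) (s : seq T) : bool :=
  [&& uniq s, (if directed then 0 < size s else 2 < size s) & cycle e s].

(* H - F has a (directed, in the directed case) cycle.  Cycles are uniq so
   have at most #|T| vertices. *)
Definition has_cycle_off (directed : bool) (T : finType) (e : rel T)
    (F : {set T}) : bool :=
  [exists k : 'I_#|T|.+1, [exists t : k.-tuple T,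
     is_cyc directed e t && all (fun x => x \notin F) t]].

Definition is_fvs (directed : bool) (T : finType) (e : rel T) (F : {set T}) : bool :=
  ~~ has_cycle_off directed e F.

(* f(H): minimum size of a feedback vertex set (setT is always one). *)
Definition fvn (directed : bool) (T : finType) (e : rel T) : nat :=
  \big[minn/#|T|]_(F : {set T} | is_fvs directed e F) #|F|.

Definition is_min_fvs (directed : bool) (T : finType) (e : rel T) (F : {set T}) : bool :=
  is_fvs directed e F && (#|F| == fvn directed e).

Definition bad (directed : bool) (T : finType) (e : rel T) (R : {set T}) : bool :=
  ~~ [exists F : {set T}, is_min_fvs directed e F && (R \subset F)].

Definition minimal_bad (directed : bool) (T : finType) (e : rel T) (R : {set T}) : bool :=
  bad directed e R && [forall R' : {set T}, (R' \proper R) ==> ~~ bad directed e R'].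

Definition uadj (T : finType) (e : rel T) (u v : T) : bool := e u v || e v u.

Definition elim_ordering (T : finType) (e : rel T) (k : nat)
    (phi : {ffun T -> 'I_#|T|}) : bool :=
  injectiveb phi &&
  [forall v, #|[set u | uadj e u v & phi u < phi v]| <= k].

Definition has_elim_ordering (T : finType) (e : rel T) (k : nat) : bool :=
  [exists phi : {ffun T -> 'I_#|T|}, elim_ordering e k phi].

(* degeneracy: least k admitting a k-elimination ordering (k = #|T| always works) *)
Definition degeneracy (T : finType) (e : rel T) : nat :=
  \big[minn/#|T|]_(k < #|T|.+1 | has_elim_ordering e k) k.

Definition has_S_last_elim_ordering (T : finType) (e : rel T) (S : {set T}) (k : nat) : bool :=
  [exists phi : {ffun T -> 'I_#|T|}, elim_ordering e k phi &&
     [forall u in S, forall v in ~: S, phi u < phi v]].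

(* D_{r' x m}: r' replaced by an independent set S of m new copies of r'. *)
Section Blowup.
Variables (T : finType) (e : rel T) (r' : T) (m : nat).
Definition blow_vt : finType := ({x : T | x != r'} + 'I_m)%type.
Definition blow_rel : rel blow_vt := fun a b =>
  match a, b with
  | inl x, inl y => e (val x) (val y)
  | inl x, inr _ => e (val x) r'
  | inr _, inl y => e r' (val y)
  | inr _, inr _ => false
  end.
Definition blow_S : {set blow_vt} := [set a : blow_vt | if a is inr _ then true else false].
End Blowup.


Definition degRL (T : finType) (e : rel T) (R : {set T}) (r' : T) : nat :=
  \big[minn/#|blow_vt r' #|R| |]_(k < #|blow_vt r' #|R| |.+1 |
      has_S_last_elim_ordering (@blow_rel T e r' #|R|) (@blow_S T r' #|R|) k) k.

(* Main.v *)
Require Import Defs.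
From mathcomp Require Import all_boot zify.
Set Implicit Arguments. Unset Strict Implicit. Unset Printing Implicit Defensive.

Lemma has_cycle_offP d (T : finType) (e : rel T) (F : {set T}) :
  reflect (exists s : seq T, is_cyc d e s && all (fun x => x \notin F) s)
          (has_cycle_off d e F).
Proof.
apply: (iffP existsP) => [[k /existsP [t /andP [c a]]] | [s /andP [c a]]].
  by exists (val t); rewrite c a.
have us : uniq s by case/and3P: c.
have hs : size s < #|T|.+1 by rewrite ltnS -(card_uniqP us) max_card.
exists (Ordinal hs); apply/existsP.
exists (@Tuple (Ordinal hs) _ s (eqxx (size s))).
by rewrite /= c a.
Qed.

Lemma fvs_setT d (T : finType) (e : rel T) : is_fvs d e setT.
Proof.
apply/has_cycle_offP => -[s /andP [/and3P [_ hs _] a]].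
case: s hs a => [|x s]; first by case: d.
by rewrite /= inE.
Qed.

Section BigMin.
Variables (I : finType) (P : pred I) (F : I -> nat) (init : nat).
Lemma bigmin_le j : P j -> \big[minn/init]_(i | P i) F i <= F j.
Proof.
rewrite unlock; move: (mem_index_enum j); elim: (index_enum I) => // x r IH.
rewrite inE => /orP [/eqP <- | jr] Pj /=.
  by rewrite Pj geq_minl.
case: (P x); last exact: IH.
by rewrite geq_min IH ?orbT.
Qed.
Lemma bigmin_le_init : \big[minn/init]_(i | P i) F i <= init.
Proof.
by elim/big_rec: _ => // i x _ IH; rewrite geq_min IH orbT.
Qed.
Lemma bigmin_cases : \big[minn/init]_(i | P i) F i = init \/
   exists j, P j /\ \big[minn/init]_(i | P i) F i = F j.
Proof.
elim/big_rec: _ => [|i x Pi [->|[j [Pj ->]]]]; first by left.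
  case: (leqP (F i) init) => h; [right; exists i; split => //; exact/minn_idPl|].
  by left.
case: (leqP (F i) (F j)) => h; right; [exists i; split => //; exact/minn_idPl|].
by exists j; split => //; apply/minn_idPr; rewrite ltnW.
Qed.
Lemma bigmin_attained j : P j -> F j <= init ->
  exists k, P k /\ \big[minn/init]_(i | P i) F i = F k.
Proof.
move=> Pj hj; case: bigmin_cases => [h|//]; exists j; split => //.
by apply/eqP; rewrite eqn_leq bigmin_le // h hj.
Qed.
End BigMin.

Lemma fvn_le d (T : finType) (e : rel T) F : is_fvs d e F -> fvn d e <= #|F|.
Proof. exact: bigmin_le. Qed.

Lemma fvn_attained d (T : finType) (e : rel T) :
  exists F, is_fvs d e F /\ fvn d e = #|F|.
Proof.
apply: (@bigmin_attained _ _ _ _ setT); first exact: fvs_setT.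
by rewrite cardsT.
Qed.

Lemma bad_lt d (T : finType) (e : rel T) R G :
  bad d e R -> is_fvs d e G -> R \subset G -> fvn d e < #|G|.
Proof.
move=> /existsPn /(_ G); rewrite /is_min_fvs => h fG RG.
rewrite ltn_neqAle fvn_le // andbT; apply: contraNN h => /eqP ->.
by rewrite fG eqxx RG.
Qed.

Lemma embed_fvs d (T1 T2 : finType) (e1 : rel T1) (e2 : rel T2) (f : T1 -> T2) F :
  injective f -> (forall a b, e1 a b = e2 (f a) (f b)) ->
  is_fvs d e2 F -> is_fvs d e1 (f @^-1: F).
Proof.
move=> fi fe; apply: contra => /has_cycle_offP [s /andP [/and3P [us ss cs] a]].
apply/has_cycle_offP; exists (map f s); apply/andP; split.
  apply/and3P; split; first by rewrite map_inj_uniq.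
    by rewrite size_map.
  rewrite cycle_map; apply: sub_in_cycle cs => [x y _ _|]; last by apply/allP.
  by rewrite /= fe.
apply/allP => x /mapP [y ys ->]; move/allP: a => /(_ y ys).
by rewrite inE.
Qed.


Lemma key_phi (U : finType) (key : U -> nat) : injective key ->
  exists phi : {ffun U -> 'I_#|U|}, injective phi /\
     forall u v, (phi u < phi v) = (key u < key v).
Proof.
move=> ki.
pose rk u := #|[set v | key v < key u]|.
have rklt u : rk u < #|U|.
  rewrite /rk -cardsT; apply: proper_card; apply/properP; split; first exact: subsetT.
  by exists u; rewrite ?inE ?ltnn.
have mono u v : (rk u < rk v) = (key u < key v).
  case: (ltnP (key u) (key v)) => h.
    apply: proper_card; apply/properP; split.
      by apply/subsetP => w; rewrite !inE => /ltn_trans; apply.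
    by exists u; rewrite !inE ?ltnn.
  apply/negbTE; rewrite -leqNgt; apply: subset_leq_card.
  by apply/subsetP => w; rewrite !inE => /leq_trans; apply.
clearbody rk.
exists [ffun u => Ordinal (rklt u)]; split.
  move=> u v; rewrite !ffunE => /(congr1 val) /= h.
  apply: ki; apply/eqP; case: (ltngtP (key u) (key v)) => // c.
    by move: (mono u v); rewrite c h ltnn.
  by move: (mono v u); rewrite c h ltnn.
by move=> u v; rewrite !ffunE /= mono.
Qed.

Lemma key_S_last (U : finType) (e : rel U) (S : {set U}) k (key : U -> nat) :
  injective key -> (forall v, #|[set u | uadj e u v & key u < key v]| <= k) ->
  (forall u v, u \in S -> v \notin S -> key u < key v) ->
  has_S_last_elim_ordering e S k.
Proof.
move=> ki hb hS; have [phi [pi pm]] := key_phi ki.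
apply/existsP; exists phi; apply/andP; split.
  apply/andP; split; first by apply/injectiveP.
  apply/forallP => v; apply: leq_trans (hb v); apply: subset_leq_card.
  by apply/subsetP => u; rewrite !inE pm.
apply/forallP => u; apply/implyP => uS; apply/forallP => v; apply/implyP.
by rewrite inE pm; apply: hS.
Qed.

Lemma key_elim (U : finType) (e : rel U) k (key : U -> nat) :
  injective key -> (forall v, #|[set u | uadj e u v & key u < key v]| <= k) ->
  has_elim_ordering e k.
Proof.
move=> ki hb; have /existsP [phi /andP [h _]] := @key_S_last U e set0 k key ki hb
  (fun u v => ltac:(by rewrite inE)).
by apply/existsP; exists phi.
Qed.

Lemma degeneracy_le (U : finType) (e : rel U) k :
  has_elim_ordering e k -> degeneracy e <= k.
Proof.
move=> h; case: (leqP k #|U|) => hk.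
  have hk' : k < #|U|.+1 by [].
  exact: (@bigmin_le _ (fun j : 'I_#|U|.+1 => has_elim_ordering e j) _ _ (Ordinal hk') h).
apply: leq_trans (ltnW hk); exact: bigmin_le_init.
Qed.


Lemma path_const (X : eqType) (L : pred X) a t :
  path (fun u v => L u == L v) a t -> forall w, w \in a :: t -> L w = L a.
Proof.
elim: t a => [|b t IH] a /=; first by move=> _ w; rewrite inE => /eqP ->.
case/andP => /eqP hab hp w; rewrite inE => /orP [/eqP -> //|wt].
by rewrite hab; apply: IH.
Qed.

Lemma cycle_closure (X : eqType) (E : rel X) (s : seq X) (y : X) (L : pred X) :
  uniq s -> cycle E s ->
  {in s &, forall u v, E u v -> u != y -> v != y -> L u = L v} -> ~~ L y ->
  forall w0, w0 \in s -> L w0 -> forall w, w \in s -> (w == y) || L w.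
Proof.
move=> us cs hL nLy w0 w0s Lw0.
have key : forall a t, {subset a :: t <= s} -> y \notin a :: t ->
    path E a t -> forall w, w \in a :: t -> L w = L a.
  move=> a t sub ny pt; apply: path_const.
  apply: (sub_in_path (P := mem (a :: t))); last first.
  - exact: pt.
  - by apply/allP.
  move=> u v uin vin Euv; apply/eqP.
  apply: hL; [exact: sub uin | exact: sub vin | exact: Euv | |].
    by apply: contraNneq ny => <-.
  by apply: contraNneq ny => <-.
have fin : forall a t, {subset a :: t <= s} -> y \notin a :: t ->
    path E a t -> {subset s <= y :: a :: t} -> forall w, w \in s -> (w == y) || L w.
  move=> a t sub ny pt ss.
  have La : L a.
    have : w0 \in a :: t.
      move: (ss _ w0s); rewrite inE => /orP [/eqP e0|//].
      by move: Lw0; rewrite e0 (negbTE nLy).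
    by move/(key a t sub ny pt) => <-.
  move=> w /ss; rewrite inE => /orP [->//|wat].
  by rewrite (key a t sub ny pt w wat) La orbT.
case: (boolP (y \in s)) => ys.
  case: (rot_to ys) => k s' hr.
  have ms : s =i y :: s' by move=> z; rewrite -hr mem_rot.
  have u' : uniq (y :: s') by rewrite -hr rot_uniq.
  have c' : cycle E (y :: s') by rewrite -hr rot_cycle.
  case: s' hr ms u' c' => [|a t] hr ms u' c'.
    by move: w0s Lw0; rewrite ms inE => /eqP ->; rewrite (negbTE nLy).
  move: c'; rewrite /= rcons_path => /andP [_ /andP [pt _]].
  have ny : y \notin a :: t by case/andP: u'.
  apply: (fin a t) => //.
    by move=> z zin; rewrite ms inE zin orbT.
  by move=> z; rewrite ms.
case hs: s => [|a t]; first by rewrite hs in w0s.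
have := cs; rewrite hs /= rcons_path => /andP [pt _]; rewrite -hs.
apply: (fin a t); [by move=> z; rewrite hs | by rewrite -hs | exact: pt |].
by move=> z; rewrite hs => zin; rewrite inE zin orbT.
Qed.

Lemma seq_max (X : eqType) (f : X -> nat) (s : seq X) : s != [::] ->
  exists2 w0, w0 \in s & forall w, w \in s -> f w <= f w0.
Proof.
elim: s => [//|a t IH] _.
case: (eqVneq t [::]) => [->|tn].
  by exists a; rewrite ?inE // => w; rewrite inE => /eqP ->.
case: (IH tn) => b bt hb.
case: (leqP (f a) (f b)) => h.
  exists b; first by rewrite inE bt orbT.
  by move=> w; rewrite inE => /orP [/eqP ->|/hb].
exists a; first by rewrite inE eqxx.
move=> w; rewrite inE => /orP [/eqP ->//|/hb hw]; exact: leq_trans hw (ltnW h).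
Qed.

Lemma cyc_map_in d (X Y : finType) (E : rel X) (e' : rel Y) (f : X -> Y) s :
  is_cyc d E s -> {in s &, injective f} ->
  {in s &, forall u v, E u v -> e' (f u) (f v)} -> is_cyc d e' (map f s).
Proof.
case/and3P => us ss cs fi fe; apply/and3P; split.
- by rewrite map_inj_in_uniq.
- by rewrite size_map.
- rewrite cycle_map; apply: (sub_in_cycle (P := mem s)); last exact: cs.
    by move=> u v uin vin /= Euv; apply: fe.
  by apply/allP.
Qed.

Lemma card_bigcup_le (X : finType) (n : nat) (F : 'I_n -> {set X}) :
  #|\bigcup_(p < n) F p| <= \sum_(p < n) #|F p|.
Proof.
apply: (big_ind2 (fun (A : {set X}) (m : nat) => #|A| <= m)) => //.
- by rewrite cards0.
- move=> A1 m1 A2 m2 h1 h2; apply: leq_trans (leq_add h1 h2).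
  by case: (leq_card_setU A1 A2).
Qed.

Lemma graph_pullback d (U W : finType) (h : U -> W) (E : rel W) :
  is_graph d E -> is_graph d (fun a b => E (h a) (h b)).
Proof.
case/andP => /forallP hirr hd; apply/andP; split.
  by apply/forallP => x; apply: hirr.
case: d hd => /forallP hd; apply/forallP => x; apply/forallP => y.
  by move: (hd (h x)) => /forallP /(_ (h y)).
by move: (hd (h x)) => /forallP /(_ (h y)).
Qed.

Section Transfer.
Variables (d : bool) (U W : finType) (h : U -> W) (E : rel W).
Hypothesis hi : injective h.
Hypothesis himg : forall a b, E a b -> exists u, h u = a.
Let EU := fun a b => E (h a) (h b).

Lemma transfer_fvs G : is_fvs d EU G -> is_fvs d E (h @: G).
Proof.
apply: contra => /has_cycle_offP [s /andP [c a]].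
have inimg : forall w, w \in s -> exists u, h u = w.
  move=> w ws; case/and3P: c => _ _ cs.
  exact: himg (next_cycle cs ws).
have [s' hs'] : exists s', map h s' = s.
  elim: s {c a} inimg => [|w t IH] inimg; first by exists [::].
  case: (inimg w (mem_head _ _)) => u hu.
  case: IH => [z zt|t' ht']; first by apply: inimg; rewrite inE zt orbT.
  by exists (u :: t'); rewrite /= hu ht'.
apply/has_cycle_offP; exists s'; apply/andP; split.
  move: c; rewrite -hs' /is_cyc map_inj_uniq // size_map.
  by rewrite cycle_map.
apply/allP => u us; move/allP: a => /(_ (h u)); rewrite -hs' map_f // => /(_ isT).
by apply: contra => uG; apply/imsetP; exists u.
Qed.

Lemma transfer_lower k : (forall F, is_fvs d E F -> k <= #|F|) -> k <= fvn d EU.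
Proof.
move=> hk; have [G [fG ->]] := fvn_attained d EU.
by rewrite -(card_imset _ hi); apply: hk; apply: transfer_fvs.
Qed.

Lemma transfer_upper F : is_fvs d E F -> fvn d EU <= #|F|.
Proof.
move=> fF; apply: leq_trans (fvn_le (embed_fvs (f := h) hi (fun a b => erefl) fF)) _.
rewrite -(card_imset _ hi); apply: subset_leq_card.
by apply/subsetP => w /imsetP [u]; rewrite inE => uF ->.
Qed.
End Transfer.


Section Construction.
Variables (d : bool) (T : finType) (e : rel T) (R : {set T}) (r' : T) (i : nat).
Hypothesis Hg : is_graph d e.
Hypothesis rR : r' \notin R.

Definition W := ('I_i.+1 * T)%type.
Definition valid (w : W) := (w.1 == 0 :> nat) || (w.2 != r').
Definition core (a b : W) :=
  [|| ((a.1 == b.1 :> nat) && e a.2 b.2),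
      ((b.1 == a.1.+1 :> nat) && (a.2 \in R) && e r' b.2) |
      ((a.1 == b.1.+1 :> nat) && (b.2 \in R) && e a.2 r')].
Definition EW : rel W := fun a b => [&& valid a, valid b & core a b].

Lemma irr a : e a a = false.
Proof. by case/andP: Hg => /forallP /(_ a) /negbTE. Qed.

Lemma EW_irr a : EW a a = false.
Proof.
rewrite /EW /core irr /=; apply/negbTE; rewrite !negb_and.
by rewrite !eqn_leq ltnn ?leqnSn /= ?andbF ?orbT.
Qed.

Lemma EW_graph : is_graph d EW.
Proof.
apply/andP; split; first by apply/forallP => a; rewrite EW_irr.
case/andP: Hg => _; case: d => /forallP hd; apply/forallP => a; apply/forallP => b.
  have hd' : forall x y, e x y -> e y x -> False.
    by move=> x y exy eyx; move: (hd x) => /forallP /(_ y); rewrite exy eyx.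
  apply/implyP; rewrite /EW /core => /and3P [_ _ h1]; apply/negP => /and3P [_ _ h2].
  case/or3P: h1 => /andP [c1 c2]; case/or3P: h2 => /andP [c3 c4].
  all: try (move: c1 c3 => /eqP c1 /eqP c3; lia).
  all: try (case/andP: c1 => /eqP c1 _; move: c3 => /eqP c3; lia).
  all: try (case/andP: c3 => /eqP c3 _; move: c1 => /eqP c1; lia).
  all: try (case/andP: c1 => /eqP c1 _; case/andP: c3 => /eqP c3 _; lia).
  all: try exact: hd' c2 c4.
have sym : forall x y, e x y = e y x.
  by move=> x y; move: (hd x) => /forallP /(_ y) /eqP.
have cs : core a b = core b a.
  rewrite /core !(sym r') (sym a.2 b.2) [(a.1 == b.1 :> nat)]eq_sym.
  by congr (_ || _); rewrite orbC.
by rewrite /EW cs andbCA eqxx.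
Qed.

Lemma nS n : (n == n.+1) = false. Proof. by elim: n. Qed.
Lemma Sn n : (n.+1 == n) = false. Proof. by elim: n. Qed.
Lemma nSS n : (n == n.+2) = false. Proof. by elim: n. Qed.
Lemma SSn n : (n.+2 == n) = false. Proof. by elim: n. Qed.

Lemma pS n : (n.-1 == n.+1) = false. Proof. by case: n => // n; rewrite /= nSS. Qed.
Lemma predn_neq n : 0 < n -> (n.-1 == n) = false. Proof. by case: n => // n _; rewrite /= nS. Qed.

Hypothesis Hbad : bad d e R.

Lemma R_nonempty : exists z0, z0 \in R.
Proof.
case: (set_0Vmem R) => [R0|[z0 ?]]; last by exists z0.
have [F [fF hF]] := fvn_attained d e.
move: Hbad => /existsPn /(_ F); rewrite /is_min_fvs fF hF eqxx R0 sub0set.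
by [].
Qed.

Lemma EW_lower FW : is_fvs d EW FW -> i.+1 * fvn d e <= #|FW|.
Proof.
move=> fFW; set f := fvn d e.
have [z0 Hz0] := R_nonempty.
pose cnt j := #|[set w in FW | (w.1 : nat) <= j]|.
pose bj j := [forall z, (z \in R) ==> (((inord j : 'I_i.+1), z) \in FW)].
have lay : forall j, cnt j.+1 = cnt j + #|[set w in FW | (w.1 : nat) == j.+1]|.
  move=> j; rewrite /cnt -(cardsID [set w : W | (w.1 : nat) <= j] [set w in FW | (w.1 : nat) <= j.+1]).
  congr (_ + _); apply: eq_card => w; rewrite !inE;
    case: (w \in FW); rewrite /= ?andbF //; apply/idP/idP; lia.
have step0 : f + bj 0 <= cnt 0.
  pose emb0 := fun a : T => ((inord 0 : 'I_i.+1), a).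
  have i00 : (inord 0 : 'I_i.+1) = 0 :> nat by rewrite inordK.
  have e0 : forall a b, e a b = EW (emb0 a) (emb0 b).
    by move=> a b; rewrite /EW /core /valid /= i00 /= orbF.
  have i0 : injective emb0 by move=> a b [].
  have G0f := embed_fvs i0 e0 fFW.
  apply: (@leq_trans #|emb0 @^-1: FW|).
    case bj0: (bj 0); last by rewrite addn0; apply: fvn_le.
    rewrite addn1; apply: bad_lt Hbad G0f _.
    apply/subsetP => z zR; rewrite inE; move/forallP: bj0 => /(_ z).
    by rewrite zR.
  rewrite -(card_imset _ i0); apply: subset_leq_card.
  apply/subsetP => x /imsetP [a aF ->]; move: aF; rewrite !inE => aF.
  by rewrite aF /= i00.
have stepS : forall j, j < i -> f + bj j.+1 <= #|[set w in FW | (w.1 : nat) == j.+1]| + bj j.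
  move=> j hj.
  have ij : (inord j : 'I_i.+1) = j :> nat by rewrite inordK // ltnW.
  have ij1 : (inord j.+1 : 'I_i.+1) = j.+1 :> nat by rewrite inordK.
  have [z [zR hz]] : exists z, z \in R /\ (bj j = false -> ((inord j : 'I_i.+1), z) \notin FW).
    case bjj: (bj j); first by exists z0.
    move: bjj => /negbT /forallPn [z]; rewrite negb_imply => /andP [zR zF].
    by exists z.
  have zr : z != r' by apply: contraNneq rR => <-.
  pose emb := fun a : T => if a == r' then ((inord j : 'I_i.+1), z) else ((inord j.+1 : 'I_i.+1), a).
  have ei : injective emb.
    move=> a b; rewrite /emb; case: (eqVneq a r') => [->|ar]; case: (eqVneq b r') => [->|br] //.
    - by case=> h _; move: (congr1 val h); rewrite /= ij ij1 => /eqP; rewrite nS.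
    - by case=> h _; move: (congr1 val h); rewrite /= ij ij1 => /eqP; rewrite Sn.
    - by case.
  have ee : forall a b, e a b = EW (emb a) (emb b).
    move=> a b; rewrite /emb; case: (eqVneq a r') => [->|ar]; case: (eqVneq b r') => [->|br].
    - by rewrite irr EW_irr.
    - by rewrite /EW /core /valid /= ij ij1 zr br zR eqxx ?nS ?nSS ?Sn ?SSn !orbT /= ?andbF ?orbF.
    - by rewrite /EW /core /valid /= ij ij1 zr ar zR eqxx ?nS ?nSS ?Sn ?SSn !orbT /= ?andbF ?orbF.
    - by rewrite /EW /core /valid /= ij1 ar br eqxx ?nS ?nSS ?Sn ?SSn !orbT /= ?andbF ?orbF.
  have Gf := embed_fvs ei ee fFW.
  have h1 : f + bj j.+1 <= #|emb @^-1: FW|.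
    case bjj: (bj j.+1); last by rewrite addn0; apply: fvn_le.
    rewrite addn1; apply: bad_lt Hbad Gf _.
    apply/subsetP => a aR; rewrite inE /emb.
    have ar : (a == r') = false by apply/negbTE; apply: contraNneq rR => <-.
    by rewrite ar; move/forallP: bjj => /(_ a); rewrite aR.
  have h2 : #|emb @^-1: FW| <= #|[set w in FW | (w.1 : nat) == j.+1]| + bj j.
    rewrite (cardsD1 r') addnC; apply: leq_add.
      pose g := fun a : T => ((inord j.+1 : 'I_i.+1), a).
      have gi : injective g by move=> a b [].
      rewrite -(card_imset _ gi); apply: subset_leq_card.
      apply/subsetP => x /imsetP [a aF ->]; move: aF; rewrite !inE => /andP [ar aF].
      by rewrite /emb (negbTE ar) in aF; rewrite aF /= ij1.
    rewrite inE /emb eqxx; case bjj: (bj j); first exact: leq_b1.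
    by rewrite (negbTE (hz bjj)).
  exact: leq_trans h1 h2.
have ind : forall j, j <= i -> j.+1 * f + bj j <= cnt j.
  elim => [_|j IH hj]; first by rewrite mul1n.
  have := IH (ltnW hj); have := stepS j hj; rewrite lay mulSn; lia.
apply: leq_trans (leq_trans (leq_addr (bj i) _) (ind i (leqnn i))) _.
by apply: subset_leq_card; apply/subsetP => w; rewrite inE => /andP [].
Qed.

Lemma EW_upper x Fx : is_fvs d e Fx -> x \in R -> x \notin Fx -> R :\ x \subset Fx ->
  exists FW, is_fvs d EW FW /\ #|FW| <= i.+1 * #|Fx|.
Proof.
move=> fFx xR xF RF.
have xr : x != r' by apply: contraNneq rR => <-.
pose g := fun (p : 'I_i.+1) (a : T) =>
  if ((p : nat) != 0) && (a == r') then ((inord p.-1 : 'I_i.+1), x) else (p, a).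
pose Fs := \bigcup_(p < i.+1) [set g p a | a in Fx].
exists Fs; split; last first.
  have := card_bigcup_le (fun p => [set g p a | a in Fx]); rewrite -/Fs => h.
  rewrite /Fs; apply: leq_trans h _.
  apply: (@leq_trans (\sum_(p < i.+1) #|Fx|)).
    by apply: leq_sum => p _; exact: leq_imset_card.
  by rewrite sum_nat_const card_ord.
have M12 : forall w, valid w -> w.2 \in Fx -> w \in Fs.
  move=> w vw wF; apply/bigcupP; exists w.1 => //; apply/imsetP; exists w.2 => //.
  rewrite /g; case: w vw {wF} => p a; rewrite /valid /=.
  by case/orP => [/eqP -> //| /negbTE ->]; rewrite andbF.
have M3 : forall p : nat, 0 < p <= i -> r' \in Fx -> ((inord p.-1 : 'I_i.+1), x) \in Fs.
  move=> p hp rF; apply/bigcupP; exists (inord p : 'I_i.+1) => //; apply/imsetP; exists r' => //.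
  rewrite /g inordK ?eqxx; last by lia.
  have -> : (p != 0) = true by lia.
  by [].
apply/has_cycle_offP => -[s /andP [cs af]].
have us : uniq s by case/and3P: cs.
have c : cycle EW s by case/and3P: cs.
have vs : forall w, w \in s -> valid w.
  by move=> w ws; have := next_cycle c ws; rewrite /EW => /and3P [].
have sn : s != [::].
  by case/and3P: cs => _ sz _; move: sz; case: (s) => //; case: d.
have [w0 w0s hmax] := seq_max (fun w : W => (w.1 : nat)) sn.
have nF : forall w, w \in s -> w \notin Fs by move=> w ws; move/allP: af => /(_ w ws).
move/has_cycle_offP: fFx; apply.
case: (posnP (w0.1 : nat)) => hp.
  have l0 : forall w, w \in s -> (w.1 : nat) = 0.
    by move=> w ws; apply/eqP; rewrite -leqn0 -hp; apply: hmax.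
  exists (map snd s); apply/andP; split.
    apply: cyc_map_in cs _ _.
      move=> u v us' vs' /= huv.
      rewrite (surjective_pairing u) (surjective_pairing v) huv; congr pair.
      by apply: val_inj; rewrite /= (l0 u us') (l0 v vs').
    move=> u v us' vs'; rewrite /EW /core => /and3P [_ _].
    by rewrite (l0 u us') (l0 v vs') /= orbF.
  apply/allP => a /mapP [w ws ->]; apply: contra (nF w ws) => wF.
  by apply: M12 => //; exact: vs.
set p := (w0.1 : nat) in hp hmax.
have pi : p <= i by rewrite /p -ltnS ltn_ord.
pose y := ((inord p.-1 : 'I_i.+1), x).
have yv : (y.1 : nat) = p.-1 by rewrite /= inordK // ltnS (leq_trans (leq_pred p) pi).
have yp : (y.1 : nat) == p = false.
  by rewrite yv predn_neq.
have HL : {in s &, forall u v, EW u v -> u != y -> v != y ->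
            ((u.1 : nat) == p) = ((v.1 : nat) == p)}.
  have side : forall u v, u \in s -> v \in s -> (v.1 : nat) = (u.1 : nat).+1 -> u.2 \in R ->
      u != y -> ((u.1 : nat) == p) = false /\ ((v.1 : nat) == p) = false.
    move=> u v us' vs' h uR uy.
    have hv := hmax v vs'.
    have hu : ((u.1 : nat) == p) = false.
      by apply/negbTE; move: h hv; clear; move=> -> hv; apply/eqP => hu; rewrite hu ltnn in hv.
    split => //; apply/negbTE/eqP => hvp.
    have u1 : u.1 = (inord p.-1 : 'I_i.+1).
      apply: val_inj; rewrite /= inordK; last by rewrite ltnS (leq_trans (leq_pred p) pi).
      by move: h hvp; clear; move=> -> <-.
    have ux : u.2 != x.
      apply: contra uy => /eqP ux; apply/eqP.
      by rewrite (surjective_pairing u) u1 ux.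
    have : u \in Fs by apply: M12 (vs u us') _; apply: (subsetP RF); rewrite !inE ux uR.
    by rewrite (negbTE (nF u us')).
  move=> u v us' vs' /and3P [_ _]; rewrite /core => /or3P [/andP [/eqP h _] | /andP [/andP [/eqP h uR] _] | /andP [/andP [/eqP h vR] _]] uy vy.
  - by rewrite h.
  - by have [-> ->] := side u v us' vs' h uR uy.
  - by have [-> ->] := side v u vs' us' h vR vy.
have cl := cycle_closure us c HL (negbT yp) w0s (eqxx p).
pose back := fun w : W => if (w.1 : nat) == p then w.2 else r'.
have vL : forall w, w \in s -> (w.1 : nat) == p -> w.2 != r'.
  move=> w ws /eqP wp; move: (vs w ws); rewrite /valid wp.
  by move: hp; clear; case: p.
exists (map back s); apply/andP; split.
  apply: cyc_map_in cs _ _.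
    move=> u v us' vs'; rewrite /back.
    case/orP: (cl u us') => [/eqP ->|Lu]; case/orP: (cl v vs') => [/eqP ->|Lv] //.
    - by rewrite yp Lv => h; move: (vL v vs' Lv); rewrite -h eqxx.
    - by rewrite yp Lu => h; move: (vL u us' Lu); rewrite h eqxx.
    - rewrite Lu Lv => h; rewrite (surjective_pairing u) (surjective_pairing v) h; congr pair.
      by apply: val_inj; move: Lu Lv => /eqP /= -> /eqP ->.
  move=> u v us' vs' Euv; rewrite /back.
  case/orP: (cl u us') => [/eqP hu|Lu]; case/orP: (cl v vs') => [/eqP hv|Lv].
  - by move: Euv; rewrite hu hv EW_irr.
  - rewrite hu yp Lv; move: Euv; rewrite hu /EW /core => /and3P [_ _].
    case/or3P => [/andP [h1 _]|/andP [_ h]|/andP [/andP [h1 _] _]] //.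
      by move: h1; rewrite yv (eqP Lv) predn_neq.
    by move: h1; rewrite yv (eqP Lv) pS.
  - rewrite hv yp Lu; move: Euv; rewrite hv /EW /core => /and3P [_ _].
    case/or3P => [/andP [h1 _]|/andP [/andP [h1 _] _]|/andP [_ h]] //.
      by move: h1; rewrite yv (eqP Lu) eq_sym predn_neq.
    by move: h1; rewrite yv (eqP Lu) pS.
  - rewrite Lu Lv; move: Euv; rewrite /EW /core => /and3P [_ _].
    case/or3P => [/andP [_ h]|/andP [/andP [h1 _] _]|/andP [/andP [h1 _] _]] //.
      by move: h1; rewrite (eqP Lu) (eqP Lv) nS.
    by move: h1; rewrite (eqP Lu) (eqP Lv) nS.
apply/allP => a /mapP [w ws ->]; apply: contra (nF w ws); rewrite /back.
case/orP: (cl w ws) => [/eqP ->|Lw].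
  by rewrite yp => rF; apply: M3 => //; rewrite pi andbT lt0n; move: hp; clear; case: p.
by rewrite Lw => wF; apply: M12 => //; exact: vs.
Qed.
End Construction.


Section Degen.
Variables (T : finType) (e : rel T) (R : {set T}) (r' : T) (i : nat).
Hypothesis irr : forall a, e a a = false.
Hypothesis rR : r' \notin R.

Local Notation Wi := (@W T i).
Local Notation EWi := (@EW T e R r' i).
Local Notation vld := (@valid T r' i).

Lemma core_cases (a b : Wi) : core e R r' a b ->
  [\/ (a.1 : nat) = b.1 /\ e a.2 b.2,
      (b.1 : nat) = (a.1 : nat).+1 /\ a.2 \in R /\ e r' b.2 |
      (a.1 : nat) = (b.1 : nat).+1 /\ b.2 \in R /\ e a.2 r'].
Proof.
rewrite /core => /or3P [/andP [/eqP h1 h2]|/andP [/andP [/eqP h1 h2] h3]|/andP [/andP [/eqP h1 h2] h3]].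
- by apply: Or31.
- by apply: Or32.
- by apply: Or33.
Qed.

Lemma EW_ordering k : (exists z0, z0 \in R) ->
  has_S_last_elim_ordering (@blow_rel T e r' #|R|) (@blow_S T r' #|R|) k ->
  exists keyW : Wi -> nat, injective keyW /\
    forall v, vld v -> #|[set w | uadj EWi w v & keyW w < keyW v]| <= k.
Proof.
move=> [z0 Hz0] /existsP [phi /andP [/andP [/injectiveP phii /forallP phib] /forallP phiS]].
set M := #|blow_vt r' #|R| |.
pose rk := fun z : T => enum_rank_in Hz0 z.
pose s0 := rk z0.
pose b0 := fun u : T => match insub u with Some x => inl x | None => inr s0 end
  : blow_vt r' #|R|.
have b0E : forall u (hu : u != r'), b0 u = inl (Sub u hu).
  by move=> u hu; rewrite /b0 insubT.
have b0r : b0 r' = inr s0 by rewrite /b0 insubF // eqxx.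
have b0i : injective b0.
  move=> a c; case: (eqVneq a r') => [->|ha]; case: (eqVneq c r') => [->|hc] //.
  - by rewrite b0r b0E.
  - by rewrite b0r b0E.
  - by rewrite !b0E => -[].
have b0rel : forall a c, e a c = @blow_rel T e r' #|R| (b0 a) (b0 c).
  move=> a c; case: (eqVneq a r') => [->|ha]; case: (eqVneq c r') => [->|hc].
  - by rewrite irr b0r.
  - by rewrite b0r b0E.
  - by rewrite b0r b0E.
  - by rewrite !b0E.
have Mpos : 0 < M by apply: leq_ltn_trans (ltn_ord (phi (b0 r'))).
pose keyW := fun w : Wi => (w.1 : nat) * M + phi (b0 w.2).
have keyE : forall w1 w2, keyW w1 = keyW w2 -> (w1.1 : nat) = w2.1 /\ phi (b0 w1.2) = phi (b0 w2.2) :> nat.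
  move=> w1 w2 h; have := congr1 (divn^~ M) h; have := congr1 (modn^~ M) h.
  rewrite /keyW /= !modnMDl !divnMDl // !modn_small ?ltn_ord // !divn_small ?ltn_ord //.
  by rewrite !addn0 => -> ->.
have keyi : injective keyW.
  move=> w1 w2 /keyE [h1 h2].
  rewrite (surjective_pairing w1) (surjective_pairing w2); congr pair.
    exact: val_inj.
  by apply: b0i; apply: phii; apply: val_inj.
have keylt : forall w v : Wi, (v.1 : nat) < w.1 -> keyW v < keyW w.
  move=> w v h; rewrite /keyW; apply: (@leq_trans ((v.1 : nat).+1 * M)).
    by rewrite mulSn [M + _]addnC ltn_add2l ltn_ord.
  by apply: leq_trans (leq_addr _ _); apply: leq_mul.
exists keyW; split => // v vv.
pose tau := fun w : Wi => if (w.1 : nat) == (v.1 : nat) then b0 w.2 else inr (rk w.2)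
  : blow_vt r' #|R|.
set A := [set w | uadj EWi w v & keyW w < keyW v].
have C1 : forall w, w \in A -> vld w /\ keyW w < keyW v /\
    (((w.1 : nat) = v.1 /\ uadj e w.2 v.2) \/
     ((w.1 : nat).+1 = v.1 /\ w.2 \in R /\ uadj e r' v.2)).
  move=> w; rewrite inE => /andP [/orP [Ewv|Evw] lt].
    case/and3P: Ewv => vw _ cw; split => //; split => //.
    case: (core_cases cw) => [[h1 h2]|[h1 [h2 h3]]|[h1 [h2 h3]]].
    - by left; rewrite /uadj h2.
    - by right; rewrite /uadj h3.
    - by have := keylt w v; rewrite h1 ltnSn => /(_ isT); rewrite ltnNge (ltnW lt).
  case/and3P: Evw => _ vw cw; split => //; split => //.
  case: (core_cases cw) => [[h1 h2]|[h1 [h2 h3]]|[h1 [h2 h3]]].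
  - by left; rewrite /uadj h2 orbT.
  - by have := keylt w v; rewrite h1 ltnSn => /(_ isT); rewrite ltnNge (ltnW lt).
  - by right; rewrite /uadj h3 orbT.
have vr : (v.1 : nat) != 0 -> v.2 != r'.
  by move: vv; rewrite /valid => /orP [/eqP -> //|].
have tin : {in A &, injective tau}.
  move=> w1 w2 w1A w2A; have [vw1 [_ c1]] := C1 w1 w1A; have [vw2 [_ c2]] := C1 w2 w2A.
  rewrite /tau; case: c1 => [[h1 _]|[h1 [h1R _]]]; case: c2 => [[h2 _]|[h2 [h2R _]]].
  - rewrite h1 h2 eqxx => /b0i h.
    by rewrite (surjective_pairing w1) (surjective_pairing w2) h; congr pair; apply: val_inj; rewrite /= h1 h2.
  - have n2 : ((w2.1 : nat) == v.1) = false by rewrite -h2 nS.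
    have w1r : w1.2 != r' by move: vw1; rewrite /valid h1 -h2.
    by rewrite n2 h1 eqxx (b0E _ w1r).
  - have n1 : ((w1.1 : nat) == v.1) = false by rewrite -h1 nS.
    have w2r : w2.2 != r' by move: vw2; rewrite /valid h2 -h1.
    by rewrite n1 h2 eqxx (b0E _ w2r).
  - have n1 : ((w1.1 : nat) == v.1) = false by rewrite -h1 nS.
    have n2 : ((w2.1 : nat) == v.1) = false by rewrite -h2 nS.
    rewrite n1 n2 => -[h].
    have e2 : w1.2 = w2.2.
      by rewrite -(enum_rankK_in Hz0 h1R) -(enum_rankK_in Hz0 h2R); congr enum_val.
    rewrite (surjective_pairing w1) (surjective_pairing w2) e2; congr pair.
    by apply: val_inj; apply/eqP; rewrite -eqSS h1 h2.
rewrite -(card_in_imset tin); apply: leq_trans (phib (b0 v.2)).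
apply: subset_leq_card; apply/subsetP => b /imsetP [w wA ->]; rewrite inE.
have [vw [lt c]] := C1 w wA; rewrite /tau; case: c => [[h1 hu]|[h1 [hR hu]]].
  rewrite h1 eqxx; apply/andP; split; first by rewrite /uadj -!b0rel.
  by move: lt; rewrite /keyW h1 ltn_add2l.
have n1 : ((w.1 : nat) == v.1) = false by rewrite -h1 nS.
have v2r : v.2 != r' by apply: vr; rewrite -h1.
rewrite n1 (b0E _ v2r); apply/andP; split; first by [].
move: (phiS (inr (rk w.2))) => /implyP; rewrite inE => /(_ isT).
by move=> /forallP /(_ (inl (Sub v.2 v2r))) /implyP; rewrite !inE => /(_ isT).
Qed.
End Degen.


Lemma card_valid (T : finType) (r' : T) i :
  #|[set w : ('I_i.+1 * T)%type | valid r' w]| = #|T| + i * (#|T| - 1).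
Proof.
rewrite -(cardsID [set w : ('I_i.+1 * T)%type | (w.1 : nat) == 0]).
have -> : [set w : ('I_i.+1 * T)%type | valid r' w] :&: [set w : ('I_i.+1 * T)%type | (w.1 : nat) == 0]
    = setX [set ord0] [set: T].
  apply/setP => w; case: w => p a; rewrite !inE /valid /= -[p == ord0]val_eqE /= andbT.
  by case: (nat_of_ord p == 0); rewrite /= ?andbF.
have -> : [set w : ('I_i.+1 * T)%type | valid r' w] :\: [set w : ('I_i.+1 * T)%type | (w.1 : nat) == 0]
    = setX [set~ ord0] [set~ r'].
  apply/setP => w; case: w => p a; rewrite !inE /valid /= -[p == ord0]val_eqE /=.
  by case: ((p : nat) == 0).
by rewrite !cardsX cards1 cardsT !cardsC1 card_ord mul1n subn1.
Qed.

Definition hmap (T : finType) (r' : T) i (a : 'I_(#|T| + i * (#|T| - 1))) : W T i :=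
  enum_val (cast_ord (esym (card_valid r' i)) a).

Lemma hmap_inj (T : finType) (r' : T) i : injective (@hmap T r' i).
Proof. by move=> a b /enum_val_inj /cast_ord_inj. Qed.

Lemma hmap_valid (T : finType) (r' : T) i a : valid r' (@hmap T r' i a).
Proof. by have := enum_valP (cast_ord (esym (card_valid r' i)) a); rewrite inE. Qed.

Lemma hmap_surj (T : finType) (r' : T) i w : valid r' w -> exists a, @hmap T r' i a = w.
Proof.
move=> vw; have Hw : w \in [set w : ('I_i.+1 * T)%type | valid r' w] by rewrite inE.
exists (cast_ord (card_valid r' i) (enum_rank_in Hw w)).
by rewrite /hmap cast_ordK enum_rankK_in.
Qed.


Lemma degRL_attained (T : finType) (e : rel T) (R : {set T}) (r' : T) :
  has_S_last_elim_ordering (@blow_rel T e r' #|R|) (@blow_S T r' #|R|) (degRL e R r').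
Proof.
set M := #|blow_vt r' #|R| |.
have hM : has_S_last_elim_ordering (@blow_rel T e r' #|R|) (@blow_S T r' #|R|) M.
  pose key := fun b : blow_vt r' #|R| =>
    match b with inl x => #|R| + enum_rank x | inr s => val s end.
  apply: (@key_S_last _ _ _ _ key).
  - move=> [x|s] [y|t] /=.
    + by move/eqP; rewrite eqn_add2l => /eqP /val_inj /enum_rank_inj ->.
    + by move=> h; have := ltn_ord t; rewrite -h ltnNge leq_addr.
    + by move=> h; have := ltn_ord s; rewrite h ltnNge leq_addr.
    + by move=> h; congr inr; apply: val_inj.
  - by move=> v; apply: max_card.
  - move=> [x|s] [y|t]; rewrite !inE //= => _ _.
    exact: leq_trans (ltn_ord s) (leq_addr _ _).
have := @bigmin_attained _ (fun j : 'I_M.+1 => has_S_last_elim_ordering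
   (@blow_rel T e r' #|R|) (@blow_S T r' #|R|) j) (fun j : 'I_M.+1 => (j : nat)) M ord_max hM (leqnn _).
by case=> k [Pk hk]; rewrite /degRL hk.
Qed.

Unset Implicit Arguments.

Theorem mainTheorem11 (directed : bool) (T : finType) (e : rel T)
    (R : {set T}) (r' : T) :
  is_graph directed e ->
  bad directed e R ->
  r' \notin R ->
  exists D : forall i : nat, rel 'I_(#|T| + i * (#|T| - 1)),
    forall i : nat,
      [/\ is_graph directed (D i),
          fvn directed e + i * fvn directed e <= fvn directed (D i),
          (minimal_bad directed e R ->
             fvn directed (D i) = fvn directed e + i * fvn directed e)
        & degeneracy (D i) <= degRL e R r'].
Proof.
move=> Hg Hbad rR.
have irrT : forall a, e a a = false := irr Hg.
have [z0 Hz0] := R_nonempty Hbad.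
exists (fun i a b => EW e R r' (@hmap T r' i a) (@hmap T r' i b)) => i.
set h := @hmap T r' i.
have hi : injective h := @hmap_inj T r' i.
have himg : forall a b, EW e R r' a b -> exists u, h u = a.
  by move=> a b /and3P [va _ _]; apply: hmap_surj.
have low : fvn directed e + i * fvn directed e <=
    fvn directed (fun a b => EW e R r' (h a) (h b)).
  rewrite -mulSn; apply: transfer_lower => // F fF.
  exact: (@EW_lower directed T e R r' i Hg rR Hbad F fF).
split => //.
- exact: graph_pullback (EW_graph i Hg rR).
- move=> /andP [_ /forallP hmin].
  have [F hF] : exists F, is_min_fvs directed e F && (R :\ z0 \subset F).
    have := hmin (R :\ z0); rewrite properD1 //= /bad negbK => /existsP [F hF].
    by exists F.
  case/andP: hF => /andP [fF /eqP cF] sF.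
  have zF : z0 \notin F.
    apply: contra Hbad => zF; apply/existsP; exists F.
    rewrite /is_min_fvs fF cF eqxx /=; apply/subsetP => z zR.
    case: (eqVneq z z0) => [->//|nz]; apply: (subsetP sF); by rewrite !inE nz.
  have [FW [fFW cFW]] := EW_upper i Hg rR Hbad fF Hz0 zF sF.
  apply/eqP; rewrite eqn_leq low andbT.
  apply: leq_trans (transfer_upper hi fFW) _.
  by rewrite -mulSn -cF.
- have [keyW [ki kb]] := EW_ordering i irrT (ex_intro _ z0 Hz0) (degRL_attained e R r').
  apply: degeneracy_le; apply: (@key_elim _ _ _ (fun a => keyW (h a))).
    by move=> a b /ki /hi.
  move=> v; apply: leq_trans (kb (h v) (hmap_valid r' v)).
  rewrite -(card_imset _ hi); apply: subset_leq_card.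
  by apply/subsetP => w /imsetP [a]; rewrite inE => ha ->; rewrite inE.
Qed.
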